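(* Let $p=p_1\dots p_r$ and $p'=p'_1\dots p'_r$ be consecutive patterns with $p_1=p'_1$, $p_r=p'_r$ and $\max_i p_i=\max_i p'_i$. Then $p$ is changeable for $p'$ if and only if for every $n$, every $e\in\mathbf{I}_n$, and every occurrence of $p$ in $e$, the change of that occurrence of $p$ into an occurrence of $p'$ is valid.
   Context: An inversion sequence of length $n$ is an integer sequence $e=e_1e_2\dots e_n$ with $0\le e_i<i$ for all $i$; $\mathbf{I}_n$ denotes the set of these. A pattern of length $r$ is a sequence $p=p_1\dots p_r$ with $p_i\in\{0,\dots,r-1\}$ such that whenever a value $j>0$ appears in $p$, the value $j-1$ also appears. The reduction of an integer word $w$ is obtained by replacing every occurrence of the $i$-th smallest distinct value of $w$ by $i-1$. An inversion sequence $e$ has an occurrence of the consecutive pattern $p$ in position $i$ if the reduction of $e_i\dots e_{i+r-1}$ equals $p$. Change: let $d=\max_i p_i=\max_i p'_i$; if $e\in\mathbf{I}_n$ has an occurrence of $p$ in position $i$, let $f:\{0,\dots,d\}\to\{e_i,\dots,e_{i+r-1}\}$ be the order-preserving bijection with $e_{i+t-1}=f(p_t)$ for $1\le t\le r$; the change of this occurrence into an occurrence of $p'$ is the sequence $e'$ with $e'_{i+t-1}=f(p'_t)$ for $1\le t\le r$ and $e'_j=e_j$ for $j<i$ or $j>i+r-1$. The change is valid if $e'\in\mathbf{I}_n$. $p$ is changeable for $p'$ if for all $1\le i\le r$, $p'_i\le\max(\{p_j:1\le j\le i\}\cup\{p_j-j+i: i<j\le r\})$. *)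

(* Defs.v *)
(* Sequences are 0-indexed seq nat. *)
From mathcomp Require Import all_boot.
Set Implicit Arguments. Unset Strict Implicit. Unset Printing Implicit Defensive.

(* e is an inversion sequence of length n: 0 <= e_i < i (1-indexed),
   i.e. with 0-indexed positions k, e`_k < k.+1 *)
Definition inv_seq (n : nat) (e : seq nat) : Prop :=
  size e = n /\ forall k, k < n -> nth 0 e k < k.+1.

Definition is_pattern (r : nat) (p : seq nat) : Prop :=
  size p = r /\ (forall t, t < r -> nth 0 p t < r) /\
  (forall j, 0 < j -> j \in p -> j.-1 \in p).

Definition values (w : seq nat) : seq nat := sort leq (undup w).

Definition reduction (w : seq nat) : seq nat :=
  map (fun x => index x (values w)) w.

Definition window (e : seq nat) (i r : nat) : seq nat := take r (drop i e).

Definition occurs_at (p e : seq nat) (i : nat) : Prop :=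
  i + size p <= size e /\ reduction (window e i (size p)) = p.

(* the change of the occurrence of p at position i into an occurrence of p':
   f is the order-preserving bijection {0..d} -> values of the window *)
Definition change (p p' e : seq nat) (i : nat) : seq nat :=
  let f := fun k => nth 0 (values (window e i (size p))) k in
  take i e ++ map f p' ++ drop (i + size p) e.

Definition valid_change (p p' e : seq nat) (i : nat) : Prop :=
  inv_seq (size e) (change p p' e i).

(* p is changeable for p' (0-indexed version of:
   p'_i <= max({p_j : j <= i} U {p_j - j + i : i < j <= r}));
   truncated subtraction is harmless since the max is >= p_0 >= 0 anyway *)
Definition changeable (p p' : seq nat) : Prop :=
  forall i, i < size p ->
    nth 0 p' i <= maxn (\max_(j < size p | j <= i) nth 0 p j)
                       (\max_(j < size p | i < j) (nth 0 p j - (j - i))).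

(* Main.v *)
Require Import Defs.
From mathcomp Require Import all_boot.
From mathcomp Require Import zify.

Lemma values_uniq w : uniq (values w).
Proof. by rewrite /values sort_uniq undup_uniq. Qed.

Lemma values_sorted w : sorted ltn (values w).
Proof. by rewrite ltn_sorted_uniq_leq values_uniq sort_sorted //; exact: leq_total. Qed.

Lemma mem_values w x : (x \in values w) = (x \in w).
Proof. by rewrite /values mem_sort mem_undup. Qed.

Lemma red_nth w p j : reduction w = p -> j < size w ->
  nth 0 (values w) (nth 0 p j) = nth 0 w j.
Proof.
move=> <- hj; rewrite (nth_map 0) // nth_index // mem_values mem_nth //.
Qed.

Lemma red_lt w p x : reduction w = p -> x \in p -> x < size (values w).
Proof.
move=> <- /mapP [y hy ->]; by rewrite index_mem mem_values.
Qed.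

Lemma strict_nth s a k : sorted ltn s -> a + k < size s ->
  nth 0 s a + k <= nth 0 s (a + k).
Proof.
move=> hs; elim: k => [|k IH] h; first by rewrite !addn0.
have h1 : a + k < size s by lia.
have := IH h1.
have : nth 0 s (a + k) < nth 0 s (a + k.+1).
  apply: (sorted_ltn_nth ltn_trans); rewrite ?inE /= //; lia.
lia.
Qed.

Lemma mono_nth s a b : sorted ltn s -> a <= b -> b < size s ->
  nth 0 s a + (b - a) <= nth 0 s b.
Proof.
move=> hs hab hb; have := @strict_nth s a (b - a) hs.
have -> : a + (b - a) = b by lia.
by move=> H; apply: H.
Qed.

Lemma bigmax_witness n (P : pred 'I_n) (F : 'I_n -> nat) m :
  0 < m -> m <= \max_(j | P j) F j -> exists j, P j /\ m <= F j.
Proof.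
move=> m0 H.
have [/existsP[j /andP[Pj Hj]]|Hn] := boolP [exists j, P j && (m <= F j)].
  by exists j.
exfalso.
have : \max_(j | P j) F j <= m.-1.
  apply/bigmax_leqP => j Pj.
  case: (leqP (F j) m.-1) => // hj.
  exfalso; move/negP: Hn; apply; apply/existsP; exists j; rewrite Pj /=; lia.
lia.
Qed.

Lemma nth_splice (e s : seq nat) i L k : size s = L -> i + L <= size e ->
  nth 0 (take i e ++ s ++ drop (i + L) e) k =
  if k < i then nth 0 e k else if k < i + L then nth 0 s (k - i) else nth 0 e k.
Proof.
move=> hs hL.
rewrite nth_cat size_takel; last by lia.
case: ifP => h1; first by rewrite nth_take.
rewrite nth_cat hs.
case: ifP => h2.
  have -> : k < i + L by lia. done.
have -> : (k < i + L) = false by lia.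
rewrite nth_drop; congr nth; move/negbT: h1; move/negbT: h2; rewrite -!leqNgt => h2 h1; rewrite -subnDA subnKC //; rewrite leq_subRL in h2 => //; exact: ltnW.
Qed.

Lemma nth_window e i n j : j < n -> nth 0 (window e i n) j = nth 0 e (i + j).
Proof. by move=> hj; rewrite /window nth_take // nth_drop. Qed.

Lemma size_window e i n : i + n <= size e -> size (window e i n) = n.
Proof. move=> h; rewrite /window size_takel // size_drop; lia. Qed.

Lemma fwd_core p p' e i t : changeable p p' -> size p' = size p ->
  (forall k, k < size e -> nth 0 e k < k.+1) -> i + size p <= size e ->
  reduction (window e i (size p)) = p ->
  \max_(x <- p) x = \max_(x <- p') x -> t < size p ->
  nth 0 (values (window e i (size p))) (nth 0 p' t) < (i + t).+1.
Proof.
move=> Hch hs' Hinv Hle Hred Hmax Ht.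
set w := window e i (size p).
set V := values w.
have hsw : size w = size p by apply: size_window.
have hV : sorted ltn V by apply: values_sorted.
have fw : forall j, j < size p -> nth 0 V (nth 0 p j) = nth 0 e (i + j).
  move=> j hj; rewrite red_nth // ?hsw // nth_window //.
have pl : forall j, j < size p -> nth 0 p j < size V.
  move=> j hj; apply: (red_lt _ _ _ Hred); exact: mem_nth.
have ei : forall j, j < size p -> nth 0 e (i + j) < (i + j).+1.
  move=> j hj; apply: Hinv; lia.
set m := nth 0 p' t.
have hm : m < size V.
  have h1 : m <= \max_(x <- p') x by apply: (leq_bigmax_seq (F:=id)) => //; rewrite /m mem_nth // hs'.
  have h2 : \max_(x <- p) x <= (size V).-1.
    apply/bigmax_leqP_seq => x hx _.
    have h := red_lt _ _ _ Hred hx; by rewrite -ltnS (ltn_predK h).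
  have := pl t Ht; lia.
case: (posnP m) => m0.
  rewrite m0.
  have := mono_nth _ _ _ hV (leq0n (nth 0 p t)) (pl t Ht).
  rewrite fw //. have := ei t Ht. lia.
have := Hch t Ht; rewrite -/m leq_max => /orP [] hA.
  have [j [Pj Hj]] := bigmax_witness _ _ _ _ m0 hA.
  have hj := ltn_ord j.
  have := mono_nth _ _ _ hV Hj (pl j hj).
  rewrite fw //. have := ei j hj. lia.
have [j [Pj Hj]] := bigmax_witness _ _ _ _ m0 hA.
have hj := ltn_ord j.
have := mono_nth _ _ _ hV (leq_trans Hj (leq_subr _ _)) (pl j hj).
rewrite fw //. have := ei j hj. move: Pj Hj. lia.
Qed.

Lemma values_map g s : (forall a b, a < b -> g a < g b) ->
  values (map g s) = map g (values s).
Proof.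
move=> gi.
have mono : {mono g : x y / x <= y}.
  move=> x y; apply/idP/idP => h.
    rewrite leqNgt; apply/negP => hh; have h2 := gi _ _ hh; by rewrite ltnNge h in h2.
  rewrite leq_eqVlt in h. case/orP: h. move/eqP. move=> ->. exact: leqnn.
  move=> hxy. apply: ltnW. exact: gi.
have inj : injective g.
  by move=> x y E; apply/eqP; rewrite eqn_leq -(mono x y) -(mono y x) E leqnn.
by rewrite /values undup_map_inj // (map_sort mono).
Qed.

Lemma reduction_map g s : (forall a b, a < b -> g a < g b) ->
  reduction (map g s) = reduction s.
Proof.
move=> gi.
have inj : injective g.
  move=> x y E; case: (ltngtP x y) => // h; have := gi _ _ h; rewrite E ltnn //.
rewrite /reduction values_map // -map_comp; apply: eq_map => x /=.
by rewrite index_map.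
Qed.

Lemma max_in (s : seq nat) : s != [::] -> \max_(x <- s) x \in s.
Proof.
elim: s => // a s IH _; rewrite big_cons.
case: s IH => [|b s] IH; first by rewrite big_nil maxn0 mem_head.
rewrite /maxn; case: ifP => h; last exact: mem_head.
rewrite in_cons; apply/orP; right; exact: IH.
Qed.

Lemma pattern_closed r p : is_pattern r p ->
  forall x, x \in p -> forall y, y <= x -> y \in p.
Proof.
move=> [_ [_ Hc]] x hx.
have key : forall k, k <= x -> x - k \in p.
  elim=> [|k IH] hk; first by rewrite subn0.
  have -> : x - k.+1 = (x - k).-1 by rewrite subnS.
  apply: Hc; [lia | apply: IH; lia].
move=> y hy; have -> : y = x - (x - y) by lia.
apply: key; lia.
Qed.

Lemma pattern_values r p : is_pattern r p -> p != [::] ->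
  values p = iota 0 (\max_(x <- p) x).+1.
Proof.
move=> Pp pne.
apply: (sorted_eq leq_trans anti_leq).
- by rewrite /values sort_sorted //; exact: leq_total.
- exact: iota_sorted.
apply: uniq_perm; [exact: values_uniq | exact: iota_uniq |].
move=> y; rewrite mem_values mem_iota add0n /=.
apply/idP/idP => h.
  by rewrite ltnS; apply: (leq_bigmax_seq (F:=id)).
apply: (pattern_closed _ _ Pp _ (max_in _ pne)); by rewrite -ltnS.
Qed.

Lemma pattern_red r p : is_pattern r p -> reduction p = p.
Proof.
move=> Pp; case: (eqVneq p [::]) => [->//|pne].
rewrite /reduction (pattern_values _ _ Pp pne).
apply: map_id_in => x hx /=.
have hx' : x < (\max_(x <- p) x).+1 by rewrite ltnS; apply: (leq_bigmax_seq (F:=id)).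
have hs : x < size (iota 0 (\max_(x <- p) x).+1) by rewrite size_iota.
have := index_uniq 0 hs (iota_uniq 0 _).
by rewrite nth_iota // add0n.
Qed.

Theorem mainTheorem4 (r : nat) (p p' : seq nat) :
  is_pattern r p -> is_pattern r p' ->
  nth 0 p 0 = nth 0 p' 0 ->
  nth 0 p r.-1 = nth 0 p' r.-1 ->
  \max_(x <- p) x = \max_(x <- p') x ->
  (changeable p p' <->
   forall (n : nat) (e : seq nat), inv_seq n e ->
     forall i : nat, occurs_at p e i -> valid_change p p' e i).
Proof.
move=> Pp Pp' _ _ Hmax.
have [sp [hpb _]] := Pp; have [sp' _] := Pp'.
have hs' : size p' = size p by rewrite sp sp'.
split.
- move=> Hch n e [Hsz Hinv] i [Hle Hred]; subst n.
  rewrite /valid_change /change /=.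
  have hL : size (map (fun k => nth 0 (values (window e i (size p))) k) p') = size p
    by rewrite size_map.
  split.
    rewrite !size_cat size_map size_takel ?size_drop; lia.
  move=> k Hk.
  rewrite (nth_splice e _ i (size p) k hL Hle).
  case: ifP => h1; first by apply: Hinv.
  case: ifP => h2; last by apply: Hinv.
  rewrite (nth_map 0); last by rewrite hs'; lia.
  have E : i + (k - i) = k by lia.
  have := fwd_core _ _ _ _ (k - i) Hch hs' Hinv Hle Hred Hmax ltac:(lia).
  by rewrite E.
- move=> H t Ht.
  rewrite leqNgt; apply/negP => Hlt.
  set m := nth 0 p' t.
  set d := \max_(x <- p) x.
  have pne : p != [::] by apply/eqP => E; rewrite E in Ht.
  have hpr : forall x, x \in p -> x < r.
    move=> x hx; rewrite -(nth_index 0 hx); apply: hpb; rewrite -sp index_mem //.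
  have hdr : d < r := hpr d (max_in _ pne).
  have hmd : m <= d.
    rewrite /d Hmax; apply: (leq_bigmax_seq (F:=id)) => //; rewrite /m mem_nth // hs' //.
  have HA : forall j, j < size p -> j <= t -> nth 0 p j < m.
    move=> j hj hjt.
    have h1 := leq_bigmax_cond (P := fun j : 'I_(size p) => j <= t)
         (F := fun j : 'I_(size p) => nth 0 p j) (Ordinal hj) hjt.
    exact: leq_ltn_trans (leq_trans h1 (leq_maxl _ _)) Hlt.
  have HB : forall j, j < size p -> t < j -> nth 0 p j - (j - t) < m.
    move=> j hj hjt.
    have h1 := leq_bigmax_cond (P := fun j : 'I_(size p) => t < j)
         (F := fun j : 'I_(size p) => nth 0 p j - (j - t)) (Ordinal hj) hjt.
    exact: leq_ltn_trans (leq_trans h1 (leq_maxr _ _)) Hlt.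
  pose g := fun k => if k < m then k else k + (r + t + 1 - m).
  have gi : forall a b, a < b -> g a < g b.
    move=> a b hab; rewrite /g; case: ifP => ha; case: ifP => hb; lia.
  pose e := nseq r 0 ++ map g p.
  have se : size e = r + r by rewrite size_cat size_nseq size_map sp.
  have hw : window e r (size p) = map g p.
    rewrite /window /e drop_size_cat ?size_nseq // take_oversize // size_map //.
  have occ : occurs_at p e r.
    split; first by rewrite se sp.
    by rewrite hw reduction_map // (pattern_red _ _ Pp).
  have inv : inv_seq (r + r) e.
    split => // k hk.
    rewrite /e nth_cat size_nseq; case: ifP => h.
      by rewrite nth_nseq h.
    have hj : k - r < size p by rewrite sp; lia.
    rewrite (nth_map 0) //.
    have hpj : nth 0 p (k - r) < r by apply: hpr; exact: mem_nth.
    rewrite /g; case: ifP => hl; first lia.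
    case: (leqP (k - r) t) => hjt.
      have := HA _ hj hjt; rewrite hl //.
    have := HB _ hj hjt. move: hl hmd hdr h hk. lia.
  have [_ Hc] := H _ _ inv r occ.
  have := Hc (r + t) ltac:(rewrite se; lia).
  have hL : size (map (fun k => nth 0 (values (window e r (size p))) k) p') = size p
    by rewrite size_map.
  rewrite (nth_splice e _ r (size p) (r + t) hL); last lia.
  have -> : (r + t < r) = false by lia.
  have -> : (r + t < r + size p) = true by lia.
  rewrite (nth_map 0); last by rewrite sp'; lia.
  have -> : r + t - r = t by lia.
  rewrite hw values_map // (pattern_values _ _ Pp pne) (nth_map 0); last by rewrite size_iota; lia.
  rewrite nth_iota; last lia.
  rewrite add0n -/m /g ltnn. lia.
Qed.
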